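(* For all integers $a,b\ge2$, the first Poisson cohomology $HP^1(\Lambda(a,b))$ (Poisson derivations modulo Hamiltonian derivations $\{\lambda,-\}$) is $2$-dimensional with basis the classes of $d_{1,0}$ and $d'_{0,1}$, where $d_{1,0}$ is the derivation with $d_{1,0}(X)=X$, $d_{1,0}(Y)=0$ and $d'_{0,1}$ is the derivation with $d'_{0,1}(X)=0$, $d'_{0,1}(Y)=Y$.
   Context: For integers $a,b\geq 2$, $\Lambda(a,b):=\mathbb C[X,Y]/(X^a,Y^b)$ with basis $X^iY^j$ ($0\le i\le a-1$, $0\le j\le b-1$) and Poisson bracket determined by $\{X,Y\}=XY$ (a skew-symmetric biderivation); equivalently $\{X^iY^j,X\}=-jX^{i+1}Y^j$, $\{X^iY^j,Y\}=iX^iY^{j+1}$. A Poisson derivation is a $\mathbb C$-linear derivation $d$ of $\Lambda(a,b)$ with $d\{f,g\}=\{df,g\}+\{f,dg\}$ for all $f,g$; Hamiltonian derivations are those of the form $\{\lambda,-\}$. $HP^1(\Lambda(a,b))$ is the quotient of Poisson derivations by Hamiltonian ones. *)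

(* Defs.v *)
From HB Require Import structures.
From mathcomp Require Import all_boot all_order all_algebra.
Set Implicit Arguments. Unset Strict Implicit. Unset Printing Implicit Defensive.
Import Order.TTheory GRing.Theory Num.Theory.
Local Open Scope ring_scope.

(* Lambda(a,b) = C[X,Y]/(X^a,Y^b); an element f is encoded by the a x b matrix
   of its coefficients: f = \sum_(i<a, j<b) f i j X^i Y^j. *)
Definition Lam (C : numClosedFieldType) (a b : nat) := 'M[C]_(a, b).

Section Lambda.
Variables (C : numClosedFieldType) (a b : nat).

(* the monomial X^i Y^j (equal to 0 when i >= a or j >= b) *)
Definition mono (i j : nat) : Lam C a b :=
  \matrix_(k < a, l < b) ((k == i :> nat) && (l == j :> nat))%:R.

Definition varX : Lam C a b := mono 1 0.
Definition varY : Lam C a b := mono 0 1.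

(* truncated product: X^i1 Y^j1 * X^i2 Y^j2 = X^(i1+i2) Y^(j1+j2) *)
Definition lmul (f g : Lam C a b) : Lam C a b :=
  \matrix_(i < a, j < b)
    \sum_(i1 < a) \sum_(j1 < b) \sum_(i2 < a) \sum_(j2 < b)
      if (((i1 + i2)%N == i :> nat) && ((j1 + j2)%N == j :> nat))
      then f i1 j1 * g i2 j2 else 0.

(* Poisson bracket determined by {X,Y} = XY (skew biderivation):
   {X^i1 Y^j1, X^i2 Y^j2} = (i1 j2 - j1 i2) X^(i1+i2) Y^(j1+j2). *)
Definition lbr (f g : Lam C a b) : Lam C a b :=
  \matrix_(i < a, j < b)
    \sum_(i1 < a) \sum_(j1 < b) \sum_(i2 < a) \sum_(j2 < b)
      if (((i1 + i2)%N == i :> nat) && ((j1 + j2)%N == j :> nat))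
      then ((i1 * j2)%N%:R - (j1 * i2)%N%:R) * (f i1 j1 * g i2 j2) else 0.

Definition is_derivation (d : Lam C a b -> Lam C a b) : Prop :=
  (forall (c : C) (f g : Lam C a b), d (c *: f + g) = c *: d f + d g) /\
  (forall f g : Lam C a b, d (lmul f g) = lmul (d f) g + lmul f (d g)).

Definition is_poisson_derivation (d : Lam C a b -> Lam C a b) : Prop :=
  is_derivation d /\
  (forall f g : Lam C a b, d (lbr f g) = lbr (d f) g + lbr f (d g)).

Definition ham (lam : Lam C a b) : Lam C a b -> Lam C a b := fun f => lbr lam f.

(* d_{1,0} = X d/dX : X^i Y^j |-> i X^i Y^j ;  d'_{0,1} = Y d/dY : X^i Y^j |-> j X^i Y^j *)
Definition d10 (f : Lam C a b) : Lam C a b := \matrix_(i < a, j < b) (i%:R * f i j).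
Definition d01 (f : Lam C a b) : Lam C a b := \matrix_(i < a, j < b) (j%:R * f i j).

End Lambda.

(* Main.v *)
Require Import Defs.
From HB Require Import structures.
From mathcomp Require Import all_boot all_order all_algebra.
Set Implicit Arguments. Unset Strict Implicit. Unset Printing Implicit Defensive.
Import GRing.Theory Num.Theory.
Local Open Scope ring_scope.

Section S.
Variables (C : numClosedFieldType) (a b : nat).
Local Notation L := (Lam C a b).
Local Notation mono := (@mono C a b).
Local Notation lmul := (@lmul C a b).
Local Notation lbr := (@lbr C a b).

Definition lin (d : L -> L) := forall (c : C) (f g : L), d (c *: f + g) = c *: d f + d g.

Lemma lin0 d : lin d -> d 0 = 0.
Proof.
move=> H; have := H 1 0 0; rewrite scaler0 addr0 scale1r => h.
by have := congr1 (fun x => x - d 0) h; rewrite /= addrK subrr => <-.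
Qed.

Lemma linD d : lin d -> forall f g, d (f + g) = d f + d g.
Proof. by move=> H f g; have := H 1 f g; rewrite !scale1r. Qed.

Lemma linZ d : lin d -> forall c f, d (c *: f) = c *: d f.
Proof. by move=> H c f; have := H c f 0; rewrite addr0 lin0 // addr0. Qed.

Lemma lin_sum d : lin d -> forall (I : Type) (r : seq I) (P : pred I) (F : I -> L),
  d (\sum_(i <- r | P i) F i) = \sum_(i <- r | P i) d (F i).
Proof. by move=> H I r P F; apply: (big_morph d (linD H) (lin0 H)). Qed.

Lemma lin_add d e : lin d -> lin e -> lin (fun f => d f + e f).
Proof. by move=> Hd He c f g; rewrite Hd He scalerDr addrACA. Qed.

Lemma lin_comp d e : lin d -> lin e -> lin (fun f => d (e f)).
Proof. by move=> Hd He c f g; rewrite He Hd. Qed.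

Lemma lin_scale d c : lin d -> lin (fun f => c *: d f).
Proof. by move=> Hd c' f g; rewrite Hd scalerDr !scalerA mulrC. Qed.

Lemma monoE i j (k : 'I_a) (l : 'I_b) :
  mono i j k l = ((k == i :> nat) && (l == j :> nat))%:R.
Proof. by rewrite mxE. Qed.

Lemma mono_ord (i : 'I_a) (j : 'I_b) : mono i j = delta_mx i j.
Proof. by apply/matrixP => k l; rewrite !mxE. Qed.

Lemma expand (f : L) : f = \sum_(i < a) \sum_(j < b) f i j *: mono i j.
Proof.
rewrite {1}(matrix_sum_delta f); apply: eq_bigr => i _; apply: eq_bigr => j _.
by rewrite mono_ord.
Qed.

Lemma ext_mono d e : lin d -> lin e ->
  (forall (i : 'I_a) (j : 'I_b), d (mono i j) = e (mono i j)) -> forall f, d f = e f.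
Proof.
move=> Hd He H f; rewrite (expand f) !lin_sum //; apply: eq_bigr => i _.
rewrite !lin_sum //; apply: eq_bigr => j _; by rewrite !linZ // H.
Qed.

Lemma zero_mono d : lin d ->
  (forall (i : 'I_a) (j : 'I_b), d (mono i j) = 0) -> forall f, d f = 0.
Proof.
move=> Hd H f; apply: (@ext_mono d (fun _ => 0)) => //.
by move=> c g h; rewrite scaler0 addr0.
Qed.

Lemma sum4_lin (F G : 'I_a -> 'I_b -> 'I_a -> 'I_b -> C) c :
  \sum_(i1 < a) \sum_(j1 < b) \sum_(i2 < a) \sum_(j2 < b) (c * F i1 j1 i2 j2 + G i1 j1 i2 j2)
  = c * (\sum_(i1 < a) \sum_(j1 < b) \sum_(i2 < a) \sum_(j2 < b) F i1 j1 i2 j2)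
    + \sum_(i1 < a) \sum_(j1 < b) \sum_(i2 < a) \sum_(j2 < b) G i1 j1 i2 j2.
Proof.
rewrite mulr_sumr -big_split; apply: eq_bigr => i1 _.
rewrite mulr_sumr -big_split; apply: eq_bigr => j1 _.
rewrite mulr_sumr -big_split; apply: eq_bigr => i2 _.
by rewrite mulr_sumr -big_split.
Qed.

Ltac sum4 := apply: eq_bigr => ? _; apply: eq_bigr => ? _;
  apply: eq_bigr => ? _; apply: eq_bigr => ? _.

Lemma lmulL_lin h : lin (fun f => lmul f h).
Proof.
move=> c f g; apply/matrixP => i j; rewrite !mxE -sum4_lin; sum4.
by rewrite !mxE; case: ifP => _; rewrite ?mulr0 ?addr0 // mulrDl mulrA.
Qed.

Lemma lmulR_lin h : lin (fun f => lmul h f).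
Proof.
move=> c f g; apply/matrixP => i j; rewrite !mxE -sum4_lin; sum4.
by rewrite !mxE; case: ifP => _; rewrite ?mulr0 ?addr0 // mulrDr mulrCA.
Qed.

Lemma lbrL_lin h : lin (fun f => lbr f h).
Proof.
move=> c f g; apply/matrixP => i j; rewrite !mxE -sum4_lin; sum4.
by rewrite !mxE; case: ifP => _; rewrite ?mulr0 ?addr0 // [(c * _ + _) * _]mulrDl
  [_ * (_ + _)]mulrDr -!mulrA mulrCA.
Qed.

Lemma lbrR_lin h : lin (fun f => lbr h f).
Proof.
move=> c f g; apply/matrixP => i j; rewrite !mxE -sum4_lin; sum4.
rewrite !mxE; case: ifP => _; rewrite ?mulr0 ?addr0 // [_ * (c * _ + _)]mulrDr [_ * (_ * _ + _)]mulrDr. congr (_ + _); rewrite [h _ _ * (c * _)]mulrCA. exact: mulrCA.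
Qed.

Lemma sum_only n (F : 'I_n -> C) (x : 'I_n) :
  (forall y, y != x -> F y = 0) -> \sum_y F y = F x.
Proof. by move=> H; rewrite (bigD1 x) //= big1 ?addr0. Qed.
Arguments sum_only [n F] x.

Lemma sum4_delta (x1 : 'I_a) (y1 : 'I_b) (x2 : 'I_a) (y2 : 'I_b)
  (F : nat -> nat -> nat -> nat -> C) :
  \sum_(i1 < a) \sum_(j1 < b) \sum_(i2 < a) \sum_(j2 < b)
   (if ((i1 == x1 :> nat) && (j1 == y1 :> nat)) && ((i2 == x2 :> nat) && (j2 == y2 :> nat))
    then F i1 j1 i2 j2 else 0) = F x1 y1 x2 y2.
Proof.
rewrite (sum_only x1) => [|y ne]; last first.
  rewrite big1 // => ? _; rewrite big1 // => ? _; rewrite big1 // => ? _.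
  by have -> : (y == x1 :> nat) = false by apply/negbTE.
rewrite (sum_only y1) => [|y ne]; last first.
  rewrite big1 // => ? _; rewrite big1 // => ? _.
  have -> : (y == y1 :> nat) = false by apply/negbTE.
  by rewrite andbF.
rewrite (sum_only x2) => [|y ne]; last first.
  rewrite big1 // => ? _.
  have -> : (y == x2 :> nat) = false by apply/negbTE.
  by rewrite !andbF.
rewrite (sum_only y2) => [|y ne]; last first.
  have -> : (y == y2 :> nat) = false by apply/negbTE.
  by rewrite !andbF.
by rewrite !eqxx.
Qed.

Lemma term_delta (cnd e1 e2 : bool) (x : C) : (e1 && e2 -> cnd) ->
  (if cnd then x * (e1%:R * e2%:R) else 0) = (if e1 && e2 then x else 0).
Proof.
case: e1; case: e2; case: cnd => //= H.
- by rewrite mulr1 mulr1.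
- by have := H isT.
- by rewrite mulr0 mulr0.
- by rewrite mul0r mulr0.
- by rewrite mul0r mulr0.
Qed.

Lemma term_zero (cnd e1 e2 : bool) (x : C) : (e1 && e2 -> ~~ cnd) ->
  (if cnd then x * (e1%:R * e2%:R) else 0) = 0.
Proof.
case: e1; case: e2; case: cnd => //= H.
- by have := H isT.
- by rewrite mulr0 mulr0.
- by rewrite mul0r mulr0.
- by rewrite mul0r mulr0.
Qed.

Lemma mono_out i j : (a <= i)%N || (b <= j)%N -> mono i j = 0.
Proof.
move=> H; apply/matrixP => k l; rewrite !mxE.
case: eqP => [ki|]; case: eqP => [lj|] //=.
by move: H; rewrite -ki -lj => /orP[]; rewrite leqNgt ltn_ord.
Qed.

Lemma lbr_mono i j k l : lbr (mono i j) (mono k l) = ((i * l)%N%:R - (j * k)%N%:R) *: mono (i + k)%N (j + l)%N.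
Proof.
have Z1 : (a <= i)%N || (b <= j)%N -> lbr (mono i j) (mono k l) = 0.
  by move=> H; rewrite (mono_out H) (lin0 (lbrL_lin _)).
have Z2 : (a <= k)%N || (b <= l)%N -> lbr (mono i j) (mono k l) = 0.
  by move=> H; rewrite (mono_out H) (lin0 (lbrR_lin _)).
have Z3 : (a <= i + k)%N || (b <= j + l)%N -> mono (i + k)%N (j + l)%N = 0 by apply: mono_out.
case: (ltnP i a) => ia; last by rewrite Z1 ?ia // Z3 ?scaler0 // (leq_trans ia (leq_addr _ _)).
case: (ltnP j b) => jb; last by rewrite Z1 ?jb ?orbT // Z3 ?scaler0 // (leq_trans jb (leq_addr _ _)) orbT.
case: (ltnP k a) => ka; last by rewrite Z2 ?ka // Z3 ?scaler0 // (leq_trans ka (leq_addl _ _)).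
case: (ltnP l b) => lb; last by rewrite Z2 ?lb ?orbT // Z3 ?scaler0 // (leq_trans lb (leq_addl _ _)) orbT.
apply/matrixP => m n; rewrite !mxE.
case H: ((m == i + k :> nat) && (n == j + l :> nat)).
  move/andP: H => [/eqP Hm /eqP Hn].
  transitivity (\sum_(i1 < a) \sum_(j1 < b) \sum_(i2 < a) \sum_(j2 < b)
   (if ((i1 == Ordinal ia :> nat) && (j1 == Ordinal jb :> nat)) && ((i2 == Ordinal ka :> nat) && (j2 == Ordinal lb :> nat))
    then (fun (i1 j1 i2 j2 : nat) => ((i1 * j2)%N%:R - (j1 * i2)%N%:R : C)) i1 j1 i2 j2 else 0)).
    sum4; rewrite !mxE term_delta //= => /andP[/andP[/eqP-> /eqP->] /andP[/eqP-> /eqP->]].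
    by rewrite Hm Hn !eqxx.
  by rewrite (sum4_delta _ _ _ _ (fun (i1 j1 i2 j2 : nat) => ((i1 * j2)%N%:R - (j1 * i2)%N%:R : C))) /= mulr1.
rewrite mulr0 big1 // => ? _; rewrite big1 // => ? _; rewrite big1 // => ? _; rewrite big1 // => ? _.
rewrite !mxE term_zero // => /andP[/andP[/eqP-> /eqP->] /andP[/eqP-> /eqP->]].
by apply/negP => /andP[/eqP Hm /eqP Hn]; move: H; rewrite -Hm -Hn !eqxx.
Qed.

Lemma term_delta1 (cnd e1 e2 : bool) : (e1 && e2 -> cnd) ->
  (if cnd then (e1%:R * e2%:R : C) else 0) = (if e1 && e2 then 1 else 0).
Proof. by move=> H; rewrite -[RHS](term_delta 1 H) mul1r. Qed.

Lemma term_zero1 (cnd e1 e2 : bool) : (e1 && e2 -> ~~ cnd) ->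
  (if cnd then (e1%:R * e2%:R : C) else 0) = 0.
Proof. by move=> H; rewrite -[RHS](term_zero 1 H) mul1r. Qed.

Lemma lmul0l h : lmul 0 h = 0.
Proof. exact: (lin0 (lmulL_lin h)). Qed.
Lemma lmul0r h : lmul h 0 = 0.
Proof. exact: (lin0 (lmulR_lin h)). Qed.

Lemma lmul_mono i j k l : lmul (mono i j) (mono k l) = mono (i + k)%N (j + l)%N.
Proof.
have Z1 : (a <= i)%N || (b <= j)%N -> lmul (mono i j) (mono k l) = 0.
  by move=> H; rewrite (mono_out H) lmul0l.
have Z2 : (a <= k)%N || (b <= l)%N -> lmul (mono i j) (mono k l) = 0.
  by move=> H; rewrite (mono_out H) lmul0r.
have Z3 : (a <= i + k)%N || (b <= j + l)%N -> mono (i + k)%N (j + l)%N = 0 by apply: mono_out.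
case: (ltnP i a) => ia; last by rewrite Z1 ?ia // Z3 // (leq_trans ia (leq_addr _ _)).
case: (ltnP j b) => jb; last by rewrite Z1 ?jb ?orbT // Z3 // (leq_trans jb (leq_addr _ _)) orbT.
case: (ltnP k a) => ka; last by rewrite Z2 ?ka // Z3 // (leq_trans ka (leq_addl _ _)).
case: (ltnP l b) => lb; last by rewrite Z2 ?lb ?orbT // Z3 // (leq_trans lb (leq_addl _ _)) orbT.
apply/matrixP => m n; rewrite !mxE.
case H: ((m == i + k :> nat) && (n == j + l :> nat)).
  move/andP: H => [/eqP Hm /eqP Hn].
  transitivity (\sum_(i1 < a) \sum_(j1 < b) \sum_(i2 < a) \sum_(j2 < b)
   (if ((i1 == Ordinal ia :> nat) && (j1 == Ordinal jb :> nat)) && ((i2 == Ordinal ka :> nat) && (j2 == Ordinal lb :> nat))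
    then (fun (i1 j1 i2 j2 : nat) => (1 : C)) i1 j1 i2 j2 else 0)).
    sum4; rewrite !mxE term_delta1 //= => /andP[/andP[/eqP-> /eqP->] /andP[/eqP-> /eqP->]].
    by rewrite Hm Hn !eqxx.
  by rewrite (sum4_delta _ _ _ _ (fun (i1 j1 i2 j2 : nat) => (1 : C))).
rewrite big1 // => ? _; rewrite big1 // => ? _; rewrite big1 // => ? _; rewrite big1 // => ? _.
rewrite !mxE term_zero1 // => /andP[/andP[/eqP-> /eqP->] /andP[/eqP-> /eqP->]].
by apply/negP => /andP[/eqP Hm /eqP Hn]; move: H; rewrite -Hm -Hn !eqxx.
Qed.

Lemma lmul_suml h I r (P : pred I) F :
  lmul (\sum_(i <- r | P i) F i) h = \sum_(i <- r | P i) lmul (F i) h.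
Proof. exact: (lin_sum (lmulL_lin h)). Qed.
Lemma lmul_sumr h I r (P : pred I) F :
  lmul h (\sum_(i <- r | P i) F i) = \sum_(i <- r | P i) lmul h (F i).
Proof. exact: (lin_sum (lmulR_lin h)). Qed.
Lemma lbr_suml h I r (P : pred I) F :
  lbr (\sum_(i <- r | P i) F i) h = \sum_(i <- r | P i) lbr (F i) h.
Proof. exact: (lin_sum (lbrL_lin h)). Qed.
Lemma lmulZl h c f : lmul (c *: f) h = c *: lmul f h.
Proof. exact: (linZ (lmulL_lin h)). Qed.
Lemma lmulZr h c f : lmul h (c *: f) = c *: lmul h f.
Proof. exact: (linZ (lmulR_lin h)). Qed.
Lemma lbrZl h c f : lbr (c *: f) h = c *: lbr f h.
Proof. exact: (linZ (lbrL_lin h)). Qed.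
Lemma lbrZr h c f : lbr h (c *: f) = c *: lbr h f.
Proof. exact: (linZ (lbrR_lin h)). Qed.
Lemma lmulDl h f g : lmul (f + g) h = lmul f h + lmul g h.
Proof. exact: (linD (lmulL_lin h)). Qed.
Lemma lmulDr h f g : lmul h (f + g) = lmul h f + lmul h g.
Proof. exact: (linD (lmulR_lin h)). Qed.

Lemma lmulC f g : lmul f g = lmul g f.
Proof.
apply: (@ext_mono (fun g => lmul f g) (fun g => lmul g f)); [exact: lmulR_lin|exact: lmulL_lin|] => i j.
apply: (@ext_mono (fun f => lmul f (mono i j)) (fun f => lmul (mono i j) f)); [exact: lmulL_lin|exact: lmulR_lin|] => k l.
by rewrite !lmul_mono addnC [(l + _)%N]addnC.
Qed.

Lemma lbr_skew f g : lbr f g = (-1) *: lbr g f.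
Proof.
apply: (@ext_mono (fun g => lbr f g) (fun g => (-1) *: lbr g f)); [exact: lbrR_lin|exact: lin_scale (lbrL_lin _)|] => i j.
apply: (@ext_mono (fun f => lbr f (mono i j)) (fun f => (-1) *: lbr (mono i j) f)); [exact: lbrL_lin|exact: lin_scale (lbrR_lin _)|] => k l.
rewrite !lbr_mono scalerA mulN1r opprB addnC [(l + _)%N]addnC.
by rewrite [(l * i)%N]mulnC [(k * j)%N]mulnC.
Qed.

Lemma unit_r f : lmul f (mono 0 0) = f.
Proof.
rewrite {1}(expand f) lmul_suml {2}(expand f); apply: eq_bigr => i _.
rewrite lmul_suml; apply: eq_bigr => j _.
by rewrite lmulZl lmul_mono !addn0.
Qed.

Lemma unit_l f : lmul (mono 0 0) f = f.
Proof. by rewrite lmulC unit_r. Qed.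

Lemma shift_entry (F : 'I_a -> 'I_b -> C) (s t : nat) (m' m : 'I_a) (n' n : 'I_b) :
  (m' + s = m)%N -> (n' + t = n)%N ->
  (\sum_(i < a) \sum_(j < b) F i j *: mono (i + s)%N (j + t)%N) m n = F m' n'.
Proof.
move=> Hm Hn; rewrite summxE (sum_only m') => [|y ne]; last first.
  rewrite summxE big1 // => j _; rewrite !mxE.
  have -> : (m == (y + s)%N :> nat) = false.
    by apply/negbTE; rewrite -Hm eqn_add2r eq_sym.
  by rewrite mulr0.
rewrite summxE (sum_only n') => [|y ne]; last first.
  rewrite !mxE.
  have -> : (n == (y + t)%N :> nat) = false.
    by apply/negbTE; rewrite -Hn eqn_add2r eq_sym.
  by rewrite andbF mulr0.
by rewrite !mxE -Hm -Hn !eqxx mulr1.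
Qed.

Lemma shift_entry0 (F : 'I_a -> 'I_b -> C) (s t : nat) (m : 'I_a) (n : 'I_b) :
  ~~ ((s <= m)%N && (t <= n)%N) ->
  (\sum_(i < a) \sum_(j < b) F i j *: mono (i + s)%N (j + t)%N) m n = 0.
Proof.
move=> H; rewrite summxE big1 // => i _; rewrite summxE big1 // => j _; rewrite !mxE.
case: eqP => [Hm|]; case: eqP => [Hn|] //=; rewrite ?mulr0 //.
by move: H; rewrite Hm Hn leq_addl leq_addl.
Qed.

Lemma lmul_shift f s t :
  lmul f (mono s t) = \sum_(i < a) \sum_(j < b) f i j *: mono (i + s)%N (j + t)%N.
Proof.
rewrite {1}(expand f) lmul_suml; apply: eq_bigr => i _.
by rewrite lmul_suml; apply: eq_bigr => j _; rewrite lmulZl lmul_mono.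
Qed.

Lemma lbr_shift f s t :
  lbr f (mono s t) = \sum_(i < a) \sum_(j < b) (((i * t)%N%:R - (j * s)%N%:R) * f i j) *: mono (i + s)%N (j + t)%N.
Proof.
rewrite {1}(expand f) lbr_suml; apply: eq_bigr => i _.
by rewrite lbr_suml; apply: eq_bigr => j _; rewrite lbrZl lbr_mono scalerA mulrC.
Qed.

Lemma lmulE f s t (m' m : 'I_a) (n' n : 'I_b) :
  (m' + s = m)%N -> (n' + t = n)%N -> lmul f (mono s t) m n = f m' n'.
Proof. by move=> Hm Hn; rewrite lmul_shift (shift_entry (fun i j => f i j) Hm Hn). Qed.

Lemma lbrE f s t (m' m : 'I_a) (n' n : 'I_b) :
  (m' + s = m)%N -> (n' + t = n)%N ->
  lbr f (mono s t) m n = ((m' * t)%N%:R - (n' * s)%N%:R) * f m' n'.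
Proof.
by move=> Hm Hn; rewrite lbr_shift (shift_entry (fun i j => ((i * t)%N%:R - (j * s)%N%:R) * f i j) Hm Hn).
Qed.

Lemma lbrE0 f s t (m : 'I_a) (n : 'I_b) :
  ~~ ((s <= m)%N && (t <= n)%N) -> lbr f (mono s t) m n = 0.
Proof. by move=> H; rewrite lbr_shift shift_entry0. Qed.

Lemma sum4_add (F G : 'I_a -> 'I_b -> 'I_a -> 'I_b -> C) :
  \sum_(i1 < a) \sum_(j1 < b) \sum_(i2 < a) \sum_(j2 < b) (F i1 j1 i2 j2 + G i1 j1 i2 j2)
  = (\sum_(i1 < a) \sum_(j1 < b) \sum_(i2 < a) \sum_(j2 < b) F i1 j1 i2 j2)
    + \sum_(i1 < a) \sum_(j1 < b) \sum_(i2 < a) \sum_(j2 < b) G i1 j1 i2 j2.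
Proof. by rewrite -[X in X + _]mul1r -sum4_lin; sum4; rewrite mul1r. Qed.

Lemma sum4_mull (F : 'I_a -> 'I_b -> 'I_a -> 'I_b -> C) c :
  c * (\sum_(i1 < a) \sum_(j1 < b) \sum_(i2 < a) \sum_(j2 < b) F i1 j1 i2 j2)
  = \sum_(i1 < a) \sum_(j1 < b) \sum_(i2 < a) \sum_(j2 < b) (c * F i1 j1 i2 j2).
Proof.
rewrite mulr_sumr; apply: eq_bigr => i1 _; rewrite mulr_sumr; apply: eq_bigr => j1 _.
by rewrite mulr_sumr; apply: eq_bigr => i2 _; rewrite mulr_sumr.
Qed.

Definition dw (w : nat -> nat -> C) (f : L) : L := \matrix_(i < a, j < b) (w i j * f i j).

Lemma dw_pd (w : nat -> nat -> C) :
  (forall i1 j1 i2 j2, w (i1 + i2)%N (j1 + j2)%N = w i1 j1 + w i2 j2) ->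
  is_poisson_derivation (dw w).
Proof.
move=> wadd; split; first split.
- move=> c f g; apply/matrixP => i j; rewrite !mxE.
  by rewrite mulrDr mulrCA.
- move=> f g; apply/matrixP => i j; rewrite !mxE sum4_mull -sum4_add; sum4.
  rewrite !mxE; case: ifP => [/andP[/eqP <- /eqP <-]|_]; last by rewrite mulr0 addr0.
  by rewrite wadd mulrDl -!mulrA [_ * (w _ _ * _)]mulrCA.
- move=> f g; apply/matrixP => i j; rewrite !mxE sum4_mull -sum4_add; sum4.
  rewrite !mxE; case: ifP => [/andP[/eqP <- /eqP <-]|_]; last by rewrite mulr0 addr0.
  rewrite wadd mulrCA -mulrDr; congr (_ * _).
  by rewrite mulrDl -!mulrA [_ * (w _ _ * _)]mulrCA.
Qed.

Lemma d10_pd : is_poisson_derivation (@d10 C a b).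
Proof. by apply: (@dw_pd (fun i j => i%:R)) => *; rewrite natrD. Qed.

Lemma d01_pd : is_poisson_derivation (@d01 C a b).
Proof. by apply: (@dw_pd (fun i j => j%:R)) => *; rewrite natrD. Qed.

Lemma ham_der (lam : L) : is_derivation (ham lam).
Proof.
split; first exact: lbrR_lin.
move=> f g; rewrite /ham.
apply: (@ext_mono (fun g => lbr lam (lmul f g)) (fun g => lmul (lbr lam f) g + lmul f (lbr lam g))).
- exact: lin_comp (lbrR_lin lam) (lmulR_lin f).
- exact: lin_add (lmulR_lin _) (lin_comp (lmulR_lin f) (lbrR_lin lam)).
move=> k l.
apply: (@ext_mono (fun f => lbr lam (lmul f (mono k l))) (fun f => lmul (lbr lam f) (mono k l) + lmul f (lbr lam (mono k l)))).
- exact: lin_comp (lbrR_lin lam) (lmulL_lin _).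
- exact: lin_add (lin_comp (lmulL_lin _) (lbrR_lin lam)) (lmulL_lin _).
move=> i j.
apply: (@ext_mono (fun lam => lbr lam (lmul (mono i j) (mono k l))) (fun lam => lmul (lbr lam (mono i j)) (mono k l) + lmul (mono i j) (lbr lam (mono k l)))).
- exact: lbrL_lin.
- exact: lin_add (lin_comp (lmulL_lin _) (lbrL_lin _)) (lin_comp (lmulR_lin _) (lbrL_lin _)).
move=> u v.
rewrite lmul_mono !lbr_mono lmulZl lmulZr !lmul_mono.
rewrite !addnA [(i + u)%N]addnC [(j + v)%N]addnC -scalerDl.
congr (_ *: _).
by rewrite !mulnDr !natrD opprD addrACA.
Qed.

Lemma der_add (d e : L -> L) : is_derivation d -> is_derivation e -> is_derivation (fun f => d f + e f).
Proof.
move=> [ld Ld] [le Le]; split; first exact: lin_add.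
by move=> f g; rewrite Ld Le lmulDl lmulDr addrACA.
Qed.

Lemma der_scale (d : L -> L) (c : C) : is_derivation d -> is_derivation (fun f => c *: d f).
Proof.
move=> [ld Ld]; split; first exact: lin_scale.
by move=> f g; rewrite Ld scalerDr lmulZl lmulZr.
Qed.

Lemma addE (A B : L) i j : (A + B) i j = A i j + B i j.
Proof. by rewrite mxE. Qed.
Lemma scaleE (c : C) (A : L) i j : (c *: A) i j = c * A i j.
Proof. by rewrite mxE. Qed.

Lemma der_mono00 d : is_derivation d -> d (mono 0 0) = 0.
Proof.
move=> [ld Ld]; have H := Ld (mono 0 0) (mono 0 0).
rewrite lmul_mono unit_r unit_l in H.
by have := congr1 (fun x => x - d (mono 0 0)) H; rewrite /= addrK subrr => <-.
Qed.

Lemma der_unique d e : is_derivation d -> is_derivation e ->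
  d (varX C a b) = e (varX C a b) -> d (varY C a b) = e (varY C a b) -> forall f, d f = e f.
Proof.
move=> Dd De HX HY; apply: ext_mono; [exact: Dd.1|exact: De.1|] => i j.
have H0 : forall j : nat, d (mono 0 j) = e (mono 0 j).
  elim=> [|k IH]; first by rewrite !der_mono00.
  have -> : mono 0 k.+1 = lmul (varY C a b) (mono 0 k) by rewrite lmul_mono.
  by rewrite Dd.2 De.2 HY IH.
elim: (nat_of_ord i) => [|k IH]; first exact: H0.
have -> : mono k.+1 j = lmul (varX C a b) (mono k j) by rewrite lmul_mono.
by rewrite Dd.2 De.2 HX IH.
Qed.

Lemma d10E f k l : @d10 C a b f k l = (k : nat)%:R * f k l.
Proof. by rewrite mxE. Qed.
Lemma d01E f k l : @d01 C a b f k l = (l : nat)%:R * f k l.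
Proof. by rewrite mxE. Qed.
Lemma varXE k l : varX C a b k l = (((k : nat) == 1%N) && ((l : nat) == 0%N))%:R.
Proof. by rewrite mxE. Qed.
Lemma varYE k l : varY C a b k l = (((k : nat) == 0%N) && ((l : nat) == 1%N))%:R.
Proof. by rewrite mxE. Qed.

Lemma alg1 (P Q : C) (k l' : nat) :
  P + Q = (k.+1)%:R * P + (l'.+1)%:R * Q -> l' != 0%N -> k%:R * (- P / l'%:R) = Q.
Proof.
move=> H l0.
have : k%:R * P + l'%:R * Q = 0.
  move: H; rewrite !mulrSr !mulrDl !mul1r addrACA => /esym/eqP.
  by rewrite -subr_eq0 addrK => /eqP.
move/eqP; rewrite addr_eq0 => /eqP H2.
by rewrite mulrA mulrN H2 opprK mulrAC mulfV ?mul1r // pnatr_eq0.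
Qed.

Lemma lam_cancel (x : C) (k : nat) : x = k%:R * x -> k != 1%N -> x = 0.
Proof.
move=> H k1; have : (k%:R - 1) * x = 0 by rewrite mulrBl mul1r -H subrr.
move/eqP; rewrite mulf_eq0 => /orP[|/eqP //].
by rewrite subr_eq0 pnatr_eq1 (negbTE k1).
Qed.

Lemma spanning (ha : (1 < a)%N) (hb : (1 < b)%N) (d : L -> L) :
  is_poisson_derivation d -> exists (alpha beta : C) (lam : L),
    forall f, d f = alpha *: d10 f + beta *: d01 f + ham lam f.
Proof.
move=> [[ld Ld] Pd].
pose p := d (varX C a b); pose q := d (varY C a b).
pose o0a : 'I_a := Ordinal (ltnW ha); pose o1a : 'I_a := Ordinal ha.
pose o0b : 'I_b := Ordinal (ltnW hb); pose o1b : 'I_b := Ordinal hb.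
have E1 : forall (m' m : 'I_a) (n' n : 'I_b), (m' + 1 = m)%N -> (n' + 1 = n)%N ->
    p m n' + q m' n = m%:R * p m n' + n%:R * q m' n.
  move=> m' m n' n Hm Hn.
  have H : lmul p (varY C a b) + lmul q (varX C a b) =
           lbr p (varY C a b) + (-1) *: lbr q (varX C a b).
    rewrite [lmul q _]lmulC -lbr_skew -Ld -Pd; congr (d _).
    by rewrite lmul_mono lbr_mono muln1 muln0 subr0 scale1r.
  have := congr1 (fun M : L => M m n) H; rewrite /= !addE scaleE.
  rewrite (@lmulE _ _ _ m m n' n) ?addn0 //.
  rewrite (@lmulE _ _ _ m' m n n) ?addn0 //.
  rewrite (@lbrE _ _ _ m m n' n) ?addn0 //.
  rewrite (@lbrE _ _ _ m' m n n) ?addn0 //.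
  by rewrite !muln1 !muln0 subr0 sub0r mulrA mulN1r opprK.
have Q : forall k : nat, (k.+1 < a)%N -> forall (x : 'I_a) (l : 'I_b), val x = k ->
    d (mono k.+1 0) x l = (k.+1)%:R * p o0a l.
  elim=> [|k IH] ka x l Hx.
    have -> : x = o0a by apply: val_inj.
    by rewrite mul1r.
  have ka' : (k < a)%N by apply: ltn_trans ka.
  have ka'' : (k.+1 < a)%N by apply: ltn_trans ka.
  pose x' : 'I_a := Ordinal ka'.
  have -> : mono k.+2 0 = lmul (mono k.+1 0) (varX C a b) by rewrite lmul_mono addn1.
  rewrite Ld addE [lmul (mono _ _) _]lmulC.
  rewrite (@lmulE (d (mono k.+1 0)) 1 0 x' x l l) /= ?addn1 ?Hx ?addn0 //.
  rewrite (@lmulE p k.+1 0 o0a x l l) /= ?add0n ?Hx ?addn0 //.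
  by rewrite IH // [(k.+2)%:R]mulrSr mulrDl mul1r.
have F1 : forall l : 'I_b, p o0a l = 0.
  move=> l; set k0 := a.-2.
  have Ea : k0.+2 = a by move: (ha); rewrite /k0; case: (a) => [|[|]].
  have k1a : (k0.+1 < a)%N by rewrite -Ea.
  have k0a : (k0 < a)%N by rewrite -Ea ltnW.
  have H : lmul (mono k0.+1 0) (varX C a b) = 0 by rewrite lmul_mono addn1 Ea mono_out ?leqnn.
  have := congr1 (fun M : L => d M (Ordinal k1a) l) H.
  rewrite /= (lin0 ld) Ld addE [lmul (mono _ _) _]lmulC.
  rewrite (@lmulE (d (mono k0.+1 0)) 1 0 (Ordinal k0a) (Ordinal k1a) l l) /= ?addn1 ?addn0 //.
  rewrite (@lmulE p k0.+1 0 o0a (Ordinal k1a) l l) /= ?add0n ?addn0 //.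
  rewrite (Q k0) // -[X in _ + X]mul1r -mulrDl -mulrSr Ea mxE => /esym /eqP.
  by rewrite eq_sym mulf_eq0 pnatr_eq0 (gtn_eqF (ltnW ha)) /= => /eqP.
have R : forall k : nat, (k.+1 < b)%N -> forall (x : 'I_a) (y : 'I_b), val y = k ->
    d (mono 0 k.+1) x y = (k.+1)%:R * q x o0b.
  elim=> [|k IH] kb x y Hy.
    have -> : y = o0b by apply: val_inj.
    by rewrite mul1r.
  have kb' : (k < b)%N by apply: ltn_trans kb.
  pose y' : 'I_b := Ordinal kb'.
  have -> : mono 0 k.+2 = lmul (mono 0 k.+1) (varY C a b) by rewrite lmul_mono addn1.
  rewrite Ld addE [lmul (mono _ _) _]lmulC.
  rewrite (@lmulE (d (mono 0 k.+1)) 0 1 x x y' y) /= ?addn1 ?Hy ?addn0 //.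
  rewrite (@lmulE q 0 k.+1 x x o0b y) /= ?add0n ?Hy ?addn0 //.
  by rewrite IH ?(ltn_trans _ kb) // [(k.+2)%:R]mulrSr mulrDl mul1r.
have G1 : forall x : 'I_a, q x o0b = 0.
  move=> x; set k0 := b.-2.
  have Eb : k0.+2 = b by move: (hb); rewrite /k0; case: (b) => [|[|]].
  have k1b : (k0.+1 < b)%N by rewrite -Eb.
  have k0b : (k0 < b)%N by rewrite -Eb ltnW.
  have H : lmul (mono 0 k0.+1) (varY C a b) = 0 by rewrite lmul_mono addn1 Eb mono_out ?leqnn ?orbT.
  have := congr1 (fun M : L => d M x (Ordinal k1b)) H.
  rewrite /= (lin0 ld) Ld addE [lmul (mono _ _) _]lmulC.
  rewrite (@lmulE (d (mono 0 k0.+1)) 0 1 x x (Ordinal k0b) (Ordinal k1b)) /= ?addn1 ?addn0 //.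
  rewrite (@lmulE q 0 k0.+1 x x o0b (Ordinal k1b)) /= ?add0n ?addn0 //.
  rewrite (R k0) // -[X in _ + X]mul1r -mulrDl -mulrSr Eb mxE => /esym /eqP.
  by rewrite eq_sym mulf_eq0 pnatr_eq0 (gtn_eqF (ltnW hb)) /= => /eqP.
pose lam : L := \matrix_(i < a, j < b)
  (if ((j : nat) != 0%N) && (i.+1 < a)%N then - p (insubd i i.+1) j / (j : nat)%:R
   else if ((i : nat) != 0%N) && (j.+1 < b)%N then q i (insubd j j.+1) / (i : nat)%:R else 0).
exists (p o1a o0b), (q o0a o1b), lam.
apply: der_unique.
- exact: (conj ld Ld).
- apply: der_add; last exact: ham_der.
  by apply: der_add; apply: der_scale; [exact: d10_pd.1 | exact: d01_pd.1].
- apply/matrixP => k l; rewrite !addE !scaleE !d10E !d01E !varXE /ham.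
  have [k0|kpos] := eqVneq (k : nat) 0%N.
    rewrite (@lbrE0 lam 1 0 k l); last by rewrite k0.
    rewrite k0 /= mul0r mulr0 add0r mulr0 addr0.
    rewrite mulr0; have -> : k = o0a by apply: val_inj.
    exact: F1.
  have kp : (0 < k)%N by rewrite lt0n.
  have k'a : (k.-1 < a)%N by rewrite (leq_ltn_trans (leq_pred k)).
  pose k' : 'I_a := Ordinal k'a.
  rewrite (@lbrE lam 1 0 k' k l l) /= ?addn1 ?prednK ?addn0 //.
  have [l0|lpos] := eqVneq (l : nat) 0%N.
    rewrite l0 muln0 mul0n subr0 !mul0r mulr0 !addr0 andbT.
    have [k1|kn1] := eqVneq (k : nat) 1%N.
      rewrite k1 mulr1 mulr1.
      have -> : k = o1a by apply: val_inj.
      by have -> : l = o0b by apply: val_inj.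
    rewrite mulr0 mulr0.
    apply: (lam_cancel _ kn1).
    have := E1 k' k l o1b; rewrite /= addn1 prednK // l0 => /(_ erefl erefl).
    by rewrite mul1r => /addIr.
  rewrite andbF !mulr0 !add0r muln0 muln1 sub0r mxE /= prednK // lpos (ltn_ord k) /=.
  have -> : insubd k' k = k by apply: val_inj; rewrite val_insubd ltn_ord.
  by rewrite mulNr mulNr mulrN opprK mulrCA mulfV ?mulr1 // pnatr_eq0.
apply/matrixP => k l; rewrite !addE !scaleE !d10E !d01E !varYE /ham.
have [l0|lpos] := eqVneq (l : nat) 0%N.
  rewrite (@lbrE0 lam 0 1 k l); last by rewrite l0 andbF.
  rewrite l0 andbF !mulr0 !addr0.
  have -> : l = o0b by apply: val_inj.
  exact: G1.
have lp : (0 < l)%N by rewrite lt0n.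
have l'b : (l.-1 < b)%N by rewrite (leq_ltn_trans (leq_pred l)).
pose l' : 'I_b := Ordinal l'b.
rewrite (@lbrE lam 0 1 k k l' l) /= ?addn1 ?prednK ?addn0 //.
rewrite muln1 muln0 subr0.
have [k0|kpos] := eqVneq (k : nat) 0%N.
  rewrite k0 !mul0r mulr0 add0r addr0 /=.
  have Hk : k = o0a by apply: val_inj.
  have [l1|ln1] := eqVneq (l : nat) 1%N.
    rewrite l1 mulr1 mulr1 Hk.
    by have -> : l = o1b by apply: val_inj.
  rewrite mulr0 mulr0.
  apply: (lam_cancel _ ln1).
  have := E1 o0a o1a l' l; rewrite /= add0n addn1 prednK // Hk => /(_ erefl erefl).
  by rewrite mul1r => /addrI.
rewrite !mulr0 !add0r mxE.
have Hl : (l'.+1 = l)%N by rewrite /= prednK.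
case: ifP => [/andP[l'0 k1a]|_].
  have := E1 k (Ordinal k1a) l' l; rewrite /= !addn1 prednK // => /(_ erefl erefl).
  have -> : insubd k k.+1 = Ordinal k1a by apply: val_inj; rewrite val_insubd k1a.
  by rewrite -Hl => H; rewrite /= (alg1 H l'0).
rewrite kpos /= Hl (ltn_ord l) /=.
have -> : insubd l' l = l by apply: val_inj; rewrite val_insubd ltn_ord.
by rewrite mulrCA mulfV ?mulr1 // pnatr_eq0.
Qed.

Lemma indep (ha : (1 < a)%N) (hb : (1 < b)%N) (alpha beta : C) (lam : L) :
  (forall f, alpha *: d10 f + beta *: d01 f = ham lam f) -> alpha = 0 /\ beta = 0.
Proof.
move=> H.
pose o0a : 'I_a := Ordinal (ltnW ha); pose o1a : 'I_a := Ordinal ha.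
pose o0b : 'I_b := Ordinal (ltnW hb); pose o1b : 'I_b := Ordinal hb.
split.
  have := congr1 (fun M : L => M o1a o0b) (H (varX C a b)).
  rewrite /= addE !scaleE d10E d01E varXE /ham (@lbrE lam 1 0 o0a o1a o0b o0b) //=.
  by rewrite !mulr1 mulr0 addr0 muln0 subrr mul0r.
have := congr1 (fun M : L => M o0a o1b) (H (varY C a b)).
rewrite /= addE !scaleE d10E d01E varYE /ham (@lbrE lam 0 1 o0a o0a o0b o1b) //=.
by rewrite !mulr1 mulr0 add0r muln0 subrr mul0r.
Qed.
End S.

Unset Implicit Arguments.

Theorem mainTheorem3 (C : numClosedFieldType) (a b : nat) :
  (2 <= a)%N -> (2 <= b)%N ->
  [/\ is_poisson_derivation (@d10 C a b) /\
        d10 (varX C a b) = varX C a b /\ d10 (varY C a b) = 0,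
      is_poisson_derivation (@d01 C a b) /\
        d01 (varX C a b) = 0 /\ d01 (varY C a b) = varY C a b,
      (forall d : Lam C a b -> Lam C a b, is_poisson_derivation d ->
         exists (alpha beta : C) (lam : Lam C a b),
           forall f, d f = alpha *: d10 f + beta *: d01 f + ham lam f)
    & (forall (alpha beta : C) (lam : Lam C a b),
         (forall f, alpha *: d10 f + beta *: d01 f = ham lam f) ->
         alpha = 0 /\ beta = 0)].
Proof.
move=> ha hb; split.
- split; first exact: d10_pd.
  split; apply/matrixP => i j; rewrite !mxE.
    by case: eqP => [->|_] /=; [rewrite mul1r | rewrite mulr0].
  by case: eqP => [->|_] /=; [rewrite mul0r | rewrite mulr0].
- split; first exact: d01_pd.
  split; apply/matrixP => i j; rewrite !mxE.
    by case: ((j : nat) =P 0%N) => [->|_]; rewrite ?andbF ?mul0r ?mulr0.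
  by case: ((j : nat) =P 1%N) => [->|_]; rewrite ?andbF ?mul1r ?mulr0.
- exact: spanning.
- move=> alpha beta lam; exact: indep.
Qed.
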